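(* Let a symmetric instance with $n$ actions and $k$ signals ($2\le k\le n$) be given, and let its truncated instance be obtained by removing actions $k+1,\dots,n$ and restricting every state $\boldsymbol\theta$ to $(\theta_1,\dots,\theta_k)$ (with the induced marginal distribution), keeping $k$ signals. Then there exists a direct scheme recommending actions in $[k]$ whose signal distribution depends only on $(\theta_1,\dots,\theta_k)$ that is both an optimal persuasive scheme with $k$ signals for the original instance and an optimal persuasive scheme with $k$ signals for the truncated instance; in particular the optimal sender utilities with $k$ signals of the two instances coincide.
   Context: Model: receiver chooses one of the actions; each action has a type; the state $\boldsymbol\theta$ is drawn from a known distribution $q$; each type $t$ has receiver value $\rho(t)$ and sender value $\xi(t)$. A scheme with $k$ signals maps states to distributions over $k$ signals; the receiver best-responds to her posterior with ties broken in favor of the sender; optimal means maximal sender expected utility among schemes with $k$ signals. Direct: each signal recommends an action; persuasive: for each signal sent with positive probability recommending $i$, the receiver's conditional expected value of $i$ is at least that of every available action. Symmetric instance: $q_{\boldsymbol\theta}=q_{\boldsymbol\theta'}$ whenever $\boldsymbol\theta'$ is a permutation of $\boldsymbol\theta$. *)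

(* Defs.v *)
From HB Require Import structures.
From mathcomp Require Import all_boot all_order all_fingroup all_algebra.
From mathcomp Require Import reals.
Set Implicit Arguments. Unset Strict Implicit. Unset Printing Implicit Defensive.
Import Order.TTheory GRing.Theory Num.Theory.
Local Open Scope ring_scope.

(* A state with m actions: each action i : 'I_m has a type theta i : T. *)
Notation state T m := {ffun 'I_m -> T}.

Definition is_distr (R : numDomainType) (T : finType) (m : nat)
  (q : state T m -> R) : Prop :=
  (forall th, 0 <= q th) /\ \sum_(th : state T m) q th = 1.

Definition is_scheme (R : numDomainType) (T : finType) (m k : nat)
  (phi : state T m -> 'I_k -> R) : Prop :=
  (forall th s, 0 <= phi th s) /\ (forall th, \sum_(s < k) phi th s = 1).

(* Joint weight: E[ f(theta_a) ; signal = s ] (unnormalized posterior value). *)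
Definition sig_weight (R : numDomainType) (T : finType) (m k : nat)
  (q : state T m -> R) (phi : state T m -> 'I_k -> R) (f : T -> R)
  (s : 'I_k) (a : 'I_m) : R :=
  \sum_(th : state T m) q th * phi th s * f (th a).

Definition sig_prob (R : numDomainType) (T : finType) (m k : nat)
  (q : state T m -> R) (phi : state T m -> 'I_k -> R) (s : 'I_k) : R :=
  \sum_(th : state T m) q th * phi th s.

Definition best_response (R : realDomainType) (T : finType) (m k : nat)
  (q : state T m -> R) (rho : T -> R) (phi : state T m -> 'I_k -> R)
  (s : 'I_k) (a : 'I_m) : bool :=
  [forall b : 'I_m, sig_weight q phi rho s b <= sig_weight q phi rho s a].

(* Sender's (unnormalized) payoff at signal s: the receiver picks a best
   response, ties broken in favour of the sender.  The default value m0 is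
   below every candidate, so the result is the max over best responses
   (nonempty as soon as m > 0). *)
Definition sender_value_at (R : realDomainType) (T : finType) (m k : nat)
  (q : state T m -> R) (rho xi : T -> R) (phi : state T m -> 'I_k -> R)
  (s : 'I_k) : R :=
  let m0 := \big[Num.min/0]_(a : 'I_m) sig_weight q phi xi s a in
  \big[Num.max/m0]_(a : 'I_m | best_response q rho phi s a)
     sig_weight q phi xi s a.

Definition sender_utility (R : realDomainType) (T : finType) (m k : nat)
  (q : state T m -> R) (rho xi : T -> R) (phi : state T m -> 'I_k -> R) : R :=
  \sum_(s < k) sender_value_at q rho xi phi s.

Definition optimal (R : realDomainType) (T : finType) (m k : nat)
  (q : state T m -> R) (rho xi : T -> R) (phi : state T m -> 'I_k -> R) : Prop :=
  is_scheme phi /\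
  forall phi' : state T m -> 'I_k -> R,
    is_scheme phi' -> sender_utility q rho xi phi' <= sender_utility q rho xi phi.

(* Direct scheme whose signal s recommends action rec s; it is persuasive if
   for every signal sent with positive probability, the recommended action
   has conditional expected receiver value at least that of every action. *)
Definition persuasive (R : realDomainType) (T : finType) (m k : nat)
  (q : state T m -> R) (rho : T -> R) (rec : 'I_k -> 'I_m)
  (phi : state T m -> 'I_k -> R) : Prop :=
  forall s : 'I_k, 0 < sig_prob q phi s ->
    forall b : 'I_m, sig_weight q phi rho s b <= sig_weight q phi rho s (rec s).

Definition symmetric_instance (R : numDomainType) (T : finType) (m : nat)
  (q : state T m -> R) : Prop :=
  forall (sigma : {perm 'I_m}) (th : state T m),
    q [ffun i => th (sigma i)] = q th.

Definition restrict (T : finType) (n k : nat) (Hkn : (k <= n)%N)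
  (th : state T n) : state T k :=
  [ffun i : 'I_k => th (widen_ord Hkn i)].

Definition marginal (R : numDomainType) (T : finType) (n k : nat)
  (Hkn : (k <= n)%N) (q : state T n -> R) (th' : state T k) : R :=
  \sum_(th : state T n | restrict Hkn th == th') q th.

(* Main.v *)
Require Import Defs.
From HB Require Import structures.
From mathcomp Require Import all_boot all_order all_fingroup all_algebra.
From mathcomp Require Import reals.
From mathcomp Require Import boolp classical_sets topology normedtype derive.
From Stdlib Require Import FunctionalExtensionality.
Import Order.TTheory GRing.Theory Num.Theory.
Set Implicit Arguments. Unset Strict Implicit. Unset Printing Implicit Defensive.
Local Open Scope ring_scope.

Lemma value_ge (R : realDomainType) (T : finType) (m k : nat)
  (q : {ffun 'I_m -> T} -> R) (rho xi : T -> R) (phi : {ffun 'I_m -> T} -> 'I_k -> R)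
  (s : 'I_k) (a : 'I_m) :
  best_response q rho phi s a ->
  sig_weight q phi xi s a <= sender_value_at q rho xi phi s.
Proof. by move=> Ha; rewrite /sender_value_at; apply: le_bigmax_cond. Qed.

Lemma value_le (R : realDomainType) (T : finType) (m k : nat)
  (q : {ffun 'I_m -> T} -> R) (rho xi : T -> R) (phi : {ffun 'I_m -> T} -> 'I_k -> R)
  (s : 'I_k) : (0 < m)%N ->
  exists a, best_response q rho phi s a /\
    sender_value_at q rho xi phi s <= sig_weight q phi xi s a.
Proof.
move=> m0.
pose i0 := Ordinal m0.
pose b0 := [arg max_(i > i0) sig_weight q phi rho s i]%O.
have Hb0 : best_response q rho phi s b0.
  rewrite /b0; case: arg_maxP => //= i _ Hi; apply/forallP => b; exact: Hi.
pose a := [arg max_(i > b0 | best_response q rho phi s i) sig_weight q phi xi s i]%O.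
have [Ha Hmax] : best_response q rho phi s a /\
   forall j, best_response q rho phi s j -> sig_weight q phi xi s j <= sig_weight q phi xi s a.
  by rewrite /a; case: arg_maxP => //= i Hi Hj; split.
exists a; split => //; rewrite /sender_value_at /=.
apply: bigmax_le => //; exact: bigmin_le.
Qed.


Definition pst (T : finType) (m : nat) (s : {perm 'I_m}) (th : {ffun 'I_m -> T}) :
  {ffun 'I_m -> T} := [ffun i => th (s i)].

Lemma pstK (T : finType) (m : nat) (s : {perm 'I_m}) (th : {ffun 'I_m -> T}) :
  pst (s^-1)%g (pst s th) = th.
Proof. by apply/ffunP => i; rewrite !ffunE permKV. Qed.

Lemma pstVK (T : finType) (m : nat) (s : {perm 'I_m}) (th : {ffun 'I_m -> T}) :
  pst s (@pst T m (s^-1)%g th) = th.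
Proof. by apply/ffunP => i; rewrite !ffunE permK. Qed.

Lemma pst_inj (T : finType) (m : nat) (s : {perm 'I_m}) : injective (@pst T m s).
Proof. by move=> a b H; rewrite -(pstK s a) H pstK. Qed.

Lemma sum_sym (R : numDomainType) (T : finType) (m : nat) (q : {ffun 'I_m -> T} -> R)
  (s : {perm 'I_m}) (G : {ffun 'I_m -> T} -> R) :
  symmetric_instance q ->
  \sum_th q th * G th = \sum_th q th * G (pst s th).
Proof.
move=> Hs; rewrite (reindex_inj (@pst_inj T m s)); apply: eq_bigr => th _.
by rewrite /pst Hs.
Qed.

Lemma weight_pst (R : numDomainType) (T : finType) (m k : nat) (q : {ffun 'I_m -> T} -> R)
  (phi : {ffun 'I_m -> T} -> 'I_k -> R) (f : T -> R) (s : {perm 'I_m}) (j : 'I_k) (b : 'I_m) :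
  symmetric_instance q ->
  sig_weight q (fun th => phi (pst s th)) f j b = sig_weight q phi f j ((s^-1)%g b).
Proof.
move=> Hs; rewrite /sig_weight.
under eq_bigr do rewrite -mulrA.
rewrite (@sum_sym R T m q (s^-1)%g _ Hs); apply: eq_bigr => th _.
by rewrite pstVK mulrA /pst ffunE.
Qed.

Definition liftf (n k : nat) (Hkn : (k <= n)%N) (i0 : 'I_k) (t : {perm 'I_k}) (x : 'I_n) : 'I_n :=
  if (x < k)%N then widen_ord Hkn (t (insubd i0 (val x))) else x.

Lemma liftf_inj (n k : nat) (Hkn : (k <= n)%N) (i0 : 'I_k) (t : {perm 'I_k}) : injective (liftf Hkn i0 t).
Proof.
move=> x y; rewrite /liftf.
case: ifP => hx; case: ifP => hy.
- move=> /(congr1 val) /= /val_inj /perm_inj /(congr1 val).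
  by rewrite !val_insubd hx hy => /val_inj.
- by move=> E; move: hy; rewrite -E /= ltn_ord.
- by move=> E; move: hx; rewrite E /= ltn_ord.
- by [].
Qed.

Definition liftp (n k : nat) (Hkn : (k <= n)%N) (i0 : 'I_k) (t : {perm 'I_k}) : {perm 'I_n} :=
  perm (@liftf_inj n k Hkn i0 t).

Lemma liftp_widen (n k : nat) (Hkn : (k <= n)%N) (i0 : 'I_k) (t : {perm 'I_k}) (j : 'I_k) :
  liftp Hkn i0 t (widen_ord Hkn j) = widen_ord Hkn (t j).
Proof.
rewrite /liftp permE /liftf /= ltn_ord; congr (widen_ord _ (t _)).
by apply: val_inj; rewrite val_insubd /= ltn_ord.
Qed.

Lemma liftp_out (n k : nat) (Hkn : (k <= n)%N) (i0 : 'I_k) (t : {perm 'I_k}) (x : 'I_n) : (k <= x)%N -> liftp Hkn i0 t x = x.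
Proof. by move=> h; rewrite /liftp permE /liftf ltnNge h. Qed.

Definition wid_of (n k : nat) (x : 'I_n) (h : (x < k)%N) : 'I_k := Ordinal h.

Lemma liftpK (n k : nat) (Hkn : (k <= n)%N) (i0 : 'I_k) (t : {perm 'I_k}) (x : 'I_n) :
  liftp Hkn i0 t (liftp Hkn i0 (t^-1)%g x) = x.
Proof.
case: (ltnP x k) => h.
  have -> : x = widen_ord Hkn (Ordinal h) by apply: val_inj.
  by rewrite !liftp_widen permKV.
by rewrite !liftp_out.
Qed.

Lemma restrict_pst (T : finType) (n k : nat) (Hkn : (k <= n)%N) (i0 : 'I_k) (t : {perm 'I_k}) (th : {ffun 'I_n -> T}) :
  restrict Hkn (pst (liftp Hkn i0 t) th) = pst t (restrict Hkn th).
Proof. by apply/ffunP => j; rewrite /restrict /pst !ffunE liftp_widen. Qed.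


Lemma sum_restrict (R : numDomainType) (T : finType) (n k : nat) (Hkn : (k <= n)%N)
  (q : {ffun 'I_n -> T} -> R) (G : {ffun 'I_k -> T} -> R) :
  \sum_th q th * G (restrict Hkn th) = \sum_th' marginal Hkn q th' * G th'.
Proof.
rewrite (partition_big (restrict Hkn) predT) //=; apply: eq_bigr => th' _.
rewrite /marginal mulr_suml; apply: eq_bigr => th /eqP <-; done.
Qed.

Lemma weight_restrict (R : numDomainType) (T : finType) (n k m : nat) (Hkn : (k <= n)%N)
  (q : {ffun 'I_n -> T} -> R) (psi : {ffun 'I_k -> T} -> 'I_m -> R) (f : T -> R)
  (s : 'I_m) (b : 'I_k) :
  sig_weight q (fun th => psi (restrict Hkn th)) f s (widen_ord Hkn b) =
  sig_weight (marginal Hkn q) psi f s b.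
Proof.
rewrite /sig_weight.
transitivity (\sum_th' marginal Hkn q th' * (psi th' s * f (th' b))); last first.
  by apply: eq_bigr => th' _; rewrite mulrA.
rewrite -(sum_restrict Hkn q (fun th' => psi th' s * f (th' b))).
by apply: eq_bigr => th _; rewrite mulrA /restrict ffunE.
Qed.

Lemma marginal_ge0 (R : numDomainType) (T : finType) (n k : nat) (Hkn : (k <= n)%N)
  (q : {ffun 'I_n -> T} -> R) : (forall th, 0 <= q th) ->
  forall th', 0 <= marginal Hkn q th'.
Proof. by move=> H th'; apply: sumr_ge0. Qed.

Lemma marginal_sym (R : numDomainType) (T : finType) (n k : nat) (Hkn : (k <= n)%N)
  (i0 : 'I_k) (q : {ffun 'I_n -> T} -> R) :
  symmetric_instance q -> symmetric_instance (marginal Hkn q).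
Proof.
move=> Hs t th'; rewrite /marginal.
rewrite (reindex_inj (@pst_inj T n (liftp Hkn i0 t))) /=.
apply: eq_big => th.
  rewrite restrict_pst; apply/eqP/eqP => [/pst_inj -> //|<-].
  by rewrite /pst; apply/ffunP => j; rewrite !ffunE.
by move=> _; rewrite /pst Hs.
Qed.

Lemma marginal_id (R : numDomainType) (T : finType) (k : nat)
  (q : {ffun 'I_k -> T} -> R) : marginal (leqnn k) q = q.
Proof.
apply: functional_extensionality => th'; rewrite /marginal.
have E : forall th : {ffun 'I_k -> T}, restrict (leqnn k) th = th.
  by move=> th; apply/ffunP => j; rewrite ffunE; congr (th _); apply: val_inj.
under eq_bigl do rewrite E.
by rewrite big_pred1_eq.
Qed.


Lemma widen_inj (k m : nat) (H : (k <= m)%N) : injective (widen_ord H).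
Proof. by move=> x y /(congr1 val) /= /val_inj. Qed.

Lemma perm_into (m k : nat) (Hkm : (k <= m)%N) (a : 'I_k -> 'I_m) :
  exists s : {perm 'I_m}, forall j, (s (a j) < k)%N.
Proof.
move: {2}#|[pred j | (k <= a j)%N]| (leqnn #|[pred j | (k <= a j)%N]|) => N.
elim: N a => [|N IH] a HN.
  case: (pickP [pred j | (k <= a j)%N]) => [s0 Hs0|Hnone].
    have : (0 < #|[pred j | (k <= a j)%N]|)%N by apply/card_gt0P; exists s0.
    by rewrite lt0n -leqn0 HN.
  exists 1%g => j; rewrite perm1; have := Hnone j; rewrite /= leqNgt.
  by move=> /negbFE.
case: (pickP [pred j | (k <= a j)%N]) => [s0 Hs0|Hnone]; last first.
  exists 1%g => j; rewrite perm1; have := Hnone j; rewrite /= leqNgt.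
  by move=> /negbFE.
pose S := [set a j | j : 'I_k].
have [y Hy] : exists y : 'I_k, widen_ord Hkm y \notin S.
  case: (boolP [forall y, widen_ord Hkm y \in S]) => [/forallP Hall|/forallPn [y Hy]];
    last by exists y.
  pose W := [set widen_ord Hkm y | y : 'I_k].
  have HW : W \proper S.
    apply/properP; split.
      by apply/fintype.subsetP => x /imsetP [y _ ->]; exact: Hall y.
    exists (a s0); first by apply: imset_f.
    apply/imsetP => -[y _ E]; move: Hs0; rewrite /= E /= leqNgt ltn_ord //.
  have := proper_card HW.
  rewrite card_imset; last exact: widen_inj.
  move=> H1; have := leq_imset_card a 'I_k.
  by rewrite card_ord => /(leq_trans H1); rewrite card_ord ltnn.
pose t := tperm (a s0) (widen_ord Hkm y).
pose a' := fun j => t (a j).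
have Hlt : (#|[pred j | (k <= a' j)%N]| < #|[pred j | (k <= a j)%N]|)%N.
  apply: proper_card; apply/properP; split.
    apply/fintype.subsetP => j; rewrite !inE /a' /t.
    case: (eqVneq (a s0) (a j)) => [<-|ne1].
      by rewrite tpermL /= leqNgt ltn_ord.
    case: (eqVneq (widen_ord Hkm y) (a j)) => [E|ne2].
      by move: Hy; rewrite E imset_f.
    by rewrite tpermD.
  exists s0 => //; rewrite !inE /a' /t tpermL /= -ltnNge ltn_ord //.
have HN' : (#|[pred j | (k <= a' j)%N]| <= N)%N.
  by rewrite -ltnS; exact: leq_trans Hlt HN.
have [s' Hs'] := IH a' HN'.
exists (t * s')%g => j; rewrite permM; exact: Hs'.
Qed.


Lemma project (R : realFieldType) (T : finType) (n k : nat) (Hkn : (k <= n)%N) (Hk : (0 < k)%N)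
  (q : {ffun 'I_n -> T} -> R) (psi0 : {ffun 'I_n -> T} -> 'I_k -> R) :
  (forall th, 0 <= q th) -> is_scheme psi0 ->
  exists psi : {ffun 'I_k -> T} -> 'I_k -> R, is_scheme psi /\
    forall f i b, sig_weight (marginal Hkn q) psi f i b = sig_weight q psi0 f i (widen_ord Hkn b).
Proof.
move=> q0 [p0 p1].
pose i0 := Ordinal Hk.
pose S th' i := \sum_(th | restrict Hkn th == th') q th * psi0 th i.
pose psi th' i := if marginal Hkn q th' == 0 then (i == i0)%:R else S th' i / marginal Hkn q th'.
have key : forall th' i, marginal Hkn q th' * psi th' i = S th' i.
  move=> th' i; rewrite /psi; case: ifP => [/eqP H|H].
    rewrite H mul0r /S; apply/esym/big1 => th Hth.
    move: H; rewrite /marginal => /psumr_eq0P H0.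
    by rewrite H0 ?mul0r // => x _; exact: q0.
  by rewrite mulrC divfK ?H.
have mpos : forall th', 0 <= marginal Hkn q th' by exact: marginal_ge0.
exists psi; split; [split|].
- move=> th' i; rewrite /psi; case: ifP => H; first by rewrite ler0n.
  apply: divr_ge0; last exact: mpos.
  by apply: sumr_ge0 => th _; apply: mulr_ge0.
- move=> th'; rewrite /psi; have [H|H] := eqVneq (marginal Hkn q th') 0.
    by rewrite (bigD1 i0) //= big1 ?addr0 // => i /negbTE ->.
  rewrite -mulr_suml /S exchange_big /=.
  under eq_bigr do rewrite -mulr_sumr p1 mulr1.
  by rewrite -/(marginal Hkn q th') divff ?H.
- move=> f i b; rewrite /sig_weight.
  under eq_bigr do rewrite key.
  rewrite (partition_big (restrict Hkn) predT) //=; apply: eq_bigr => th' _.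
  rewrite /S mulr_suml; apply: eq_bigr => th /eqP <-.
  by rewrite /restrict ffunE.
Qed.


Definition persP (R : realDomainType) (T : finType) (k : nat) (q' : {ffun 'I_k -> T} -> R)
  (rho : T -> R) (psi : {ffun 'I_k -> T} -> 'I_k -> R) : Prop :=
  forall s b : 'I_k, sig_weight q' psi rho s b <= sig_weight q' psi rho s s.

Definition Lval (R : realDomainType) (T : finType) (k : nat) (q' : {ffun 'I_k -> T} -> R)
  (xi : T -> R) (psi : {ffun 'I_k -> T} -> 'I_k -> R) : R :=
  \sum_(s < k) sig_weight q' psi xi s s.


Lemma convert (R : realFieldType) (T : finType) (m k : nat) (Hkm : (k <= m)%N) (Hk : (0 < k)%N)
  (qm : {ffun 'I_m -> T} -> R) (rho xi : T -> R) (phi : {ffun 'I_m -> T} -> 'I_k -> R) :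
  (forall th, 0 <= qm th) -> symmetric_instance qm -> is_scheme phi ->
  exists psi, (is_scheme psi /\ persP (marginal Hkm qm) rho psi) /\
    sender_utility qm rho xi phi <= Lval (marginal Hkm qm) xi psi.
Proof.
move=> q0 Hs [p0 p1].
have m0 : (0 < m)%N by exact: leq_trans Hk Hkm.
have [a Ha] := fin_all_exists (fun s => @value_le R T m k qm rho xi phi s m0).
have [sg Hsg] := perm_into Hkm a.
pose i0 := Ordinal Hk.
pose idx s : 'I_k := insubd i0 (val (sg (a s))).
have widx : forall s, widen_ord Hkm (idx s) = sg (a s).
  by move=> s; apply: val_inj; rewrite /= val_insubd Hsg.
pose psi0 th i := \sum_(s | idx s == i) phi (pst sg th) s.
have Wpsi0 : forall f i x, sig_weight qm psi0 f i x =
    \sum_(s | idx s == i) sig_weight qm phi f s ((sg^-1)%g x).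
  move=> f i x; under [RHS]eq_bigr do rewrite -(weight_pst phi f sg _ _ Hs).
  rewrite /sig_weight exchange_big /=; apply: eq_bigr => th _.
  by rewrite mulr_sumr mulr_suml; apply: eq_bigr => s _.
have sum_idx : forall F : 'I_k -> R, \sum_i \sum_(s | idx s == i) F s = \sum_s F s.
  by move=> F; rewrite [RHS](partition_big idx predT).
have sch0 : is_scheme psi0.
  split; first by move=> th i; apply: sumr_ge0 => s _; exact: p0.
  by move=> th; rewrite /psi0 sum_idx p1.
have [psi [schpsi Wpsi]] := project Hkm Hk q0 sch0.
have Wi : forall f i, sig_weight (marginal Hkm qm) psi f i i =
    \sum_(s | idx s == i) sig_weight qm phi f s (a s).
  move=> f i; rewrite Wpsi Wpsi0; apply: eq_bigr => s /eqP <-.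
  by rewrite widx permK.
exists psi; split; [split => //|].
  move=> i b; rewrite Wi Wpsi Wpsi0; apply: ler_sum => s _.
  by have [/forallP H _] := Ha s; exact: H.
rewrite /Lval; under eq_bigr do rewrite Wi; rewrite sum_idx /sender_utility.
by apply: ler_sum => s _; have [_ H] := Ha s.
Qed.


Definition cst (R : numFieldType) (k : nat) : R := (#|{perm 'I_k}|%:R)^-1.

Lemma cstK (R : numFieldType) (k : nat) : @cst R k * #|{perm 'I_k}|%:R = 1.
Proof.
rewrite /cst mulVf // pnatr_eq0 -lt0n; apply/card_gt0P; by exists 1%g.
Qed.

Lemma cst_ge0 (R : numFieldType) (k : nat) : 0 <= @cst R k.
Proof. by rewrite /cst invr_ge0 ler0n. Qed.

Definition psym (R : numFieldType) (T : finType) (k : nat) (psi : {ffun 'I_k -> T} -> 'I_k -> R)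
  (th' : {ffun 'I_k -> T}) (i : 'I_k) : R :=
  cst R k * \sum_(t : {perm 'I_k}) psi (pst (t^-1)%g th') (t i).

Lemma Wsym (R : numFieldType) (T : finType) (k : nat) (q' : {ffun 'I_k -> T} -> R)
  (psi : {ffun 'I_k -> T} -> 'I_k -> R) (f : T -> R) (i b : 'I_k) :
  symmetric_instance q' ->
  sig_weight q' (psym psi) f i b = cst R k * \sum_(t : {perm 'I_k}) sig_weight q' psi f (t i) (t b).
Proof.
move=> Hs.
transitivity (cst R k * \sum_(t : {perm 'I_k})
   sig_weight q' (fun th' => psi (pst (t^-1)%g th')) f (t i) b).
  rewrite /sig_weight /psym [RHS]mulr_sumr.
  under [RHS]eq_bigr do rewrite mulr_sumr.
  rewrite [RHS]exchange_big /=.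
  apply: eq_bigr => th _.
  rewrite big_distrr big_distrr big_distrl /=; apply: eq_bigr => t _.
  by rewrite !mulrA [q' th * _]mulrC.
congr (_ * _); apply: eq_bigr => t _.
by rewrite (weight_pst psi f (t^-1)%g _ _ Hs) invgK.
Qed.

Lemma psym_good (R : realFieldType) (T : finType) (k : nat) (q' : {ffun 'I_k -> T} -> R)
  (rho xi : T -> R) (psi : {ffun 'I_k -> T} -> 'I_k -> R) :
  symmetric_instance q' -> is_scheme psi -> persP q' rho psi ->
  [/\ is_scheme (psym psi), persP q' rho (psym psi) & Lval q' xi (psym psi) = Lval q' xi psi].
Proof.
move=> Hs [p0 p1] Hp.
have HP : forall (t : {perm 'I_k}) (F : 'I_k -> R), \sum_i F (t i) = \sum_i F i.
  by move=> t F; rewrite [RHS](reindex_perm t).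
split.
- split.
    move=> th i; rewrite /psym; apply: mulr_ge0; first exact: cst_ge0.
    by apply: sumr_ge0 => t _; exact: p0.
  move=> th; rewrite /psym -mulr_sumr exchange_big /=.
  under eq_bigr => t _ do rewrite (HP t (psi (pst (t^-1)%g th))) p1.
  by rewrite sumr_const; exact: cstK.
- move=> i b; rewrite !Wsym //; apply: ler_wpM2l; first exact: cst_ge0.
  by apply: ler_sum => t _; exact: Hp.
- rewrite /Lval; under eq_bigr do rewrite Wsym //.
  rewrite -mulr_sumr exchange_big /=.
  under eq_bigr => t _ do rewrite (HP t (fun s => sig_weight q' psi xi s s)).
  rewrite sumr_const -mulr_natr mulrCA.
  have -> : cst R k * (#|{perm 'I_k}|%:R) = 1 by exact: cstK.
  by rewrite mulr1.
Qed.


Lemma sym_indep (R : realFieldType) (T : finType) (n k : nat) (Hkn : (k <= n)%N) (i0 : 'I_k)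
  (q : {ffun 'I_n -> T} -> R) (psi : {ffun 'I_k -> T} -> 'I_k -> R) (g : {ffun 'I_n -> T} -> R) :
  symmetric_instance q ->
  (forall t th, g (pst (liftp Hkn i0 t) th) = g th) ->
  forall i j : 'I_k,
  \sum_th q th * psym psi (restrict Hkn th) i * g th =
  \sum_th q th * psym psi (restrict Hkn th) j * g th.
Proof.
move=> Hs Hg.
pose Uf s := \sum_th q th * psi (restrict Hkn th) s * g th.
have E : forall i, \sum_th q th * psym psi (restrict Hkn th) i * g th =
    cst R k * \sum_(t : {perm 'I_k}) Uf (t i).
  move=> i.
  transitivity (cst R k * \sum_(t : {perm 'I_k})
     \sum_th q th * psi (pst (t^-1)%g (restrict Hkn th)) (t i) * g th).
    rewrite /psym big_distrr /=; under [RHS]eq_bigr do rewrite big_distrr /=.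
    rewrite [RHS]exchange_big /=; apply: eq_bigr => th _.
    rewrite big_distrr big_distrr big_distrl /=; apply: eq_bigr => t _.
    by rewrite !mulrA [q th * _]mulrC.
  congr (_ * _); apply: eq_bigr => t _.
  under eq_bigr do rewrite -(restrict_pst Hkn i0) -mulrA.
  rewrite (sum_sym (liftp Hkn i0 t) _ Hs) /Uf; apply: eq_bigr => th _.
  rewrite mulrA Hg; congr (_ * psi _ _ * _); congr (restrict _ _).
  by apply/ffunP => x; rewrite /pst !ffunE liftpK.
move=> i j; rewrite !E; congr (_ * _).
rewrite (reindex_inj (mulgI (tperm j i))) /=; apply: eq_bigr => t _.
by rewrite permM tpermR.
Qed.

Lemma sym_sum (R : realFieldType) (T : finType) (n k : nat) (Hkn : (k <= n)%N) (i0 : 'I_k)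
  (q : {ffun 'I_n -> T} -> R) (psi : {ffun 'I_k -> T} -> 'I_k -> R) (g : {ffun 'I_n -> T} -> R) :
  symmetric_instance q -> is_scheme (psym psi) ->
  (forall t th, g (pst (liftp Hkn i0 t) th) = g th) ->
  forall i : 'I_k,
  (\sum_th q th * psym psi (restrict Hkn th) i * g th) *+ k = \sum_th q th * g th.
Proof.
move=> Hs [_ p1] Hg i.
have := sym_indep psi Hs Hg i => Hind.
transitivity (\sum_(j < k) \sum_th q th * psym psi (restrict Hkn th) j * g th).
  by rewrite -[X in _ *+ X]card_ord -sumr_const; apply: eq_bigr => j _; rewrite (Hind j).
rewrite exchange_big /=; apply: eq_bigr => th _.
by rewrite -big_distrl -big_distrr /= p1 mulr1.
Qed.

Lemma mu_eq (R : numDomainType) (T : finType) (n : nat) (q : {ffun 'I_n -> T} -> R) (rho : T -> R) :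
  symmetric_instance q -> forall x y : 'I_n,
  \sum_th q th * rho (th x) = \sum_th q th * rho (th y).
Proof.
move=> Hs x y; rewrite (sum_sym (tperm x y) _ Hs); apply: eq_bigr => th _.
by rewrite /pst ffunE tpermL.
Qed.

Lemma full_pers (R : realFieldType) (T : finType) (n k : nat) (Hkn : (k <= n)%N) (i0 : 'I_k)
  (q : {ffun 'I_n -> T} -> R) (rho : T -> R) (psi : {ffun 'I_k -> T} -> 'I_k -> R) :
  symmetric_instance q -> is_scheme (psym psi) -> persP (marginal Hkn q) rho (psym psi) ->
  forall (i : 'I_k) (b : 'I_n),
  sig_weight q (fun th => psym psi (restrict Hkn th)) rho i b <=
  sig_weight q (fun th => psym psi (restrict Hkn th)) rho i (widen_ord Hkn i).
Proof.
move=> Hs Hsch Hp i b.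
have k0 : (0 < k)%N by case: (k) i0 => [[]|].
case: (ltnP b k) => hb.
  have -> : b = widen_ord Hkn (Ordinal hb) by apply: val_inj.
  by rewrite !weight_restrict; exact: Hp.
pose mu := \sum_th q th * rho (th b).
have Hout : (sig_weight q (fun th => psym psi (restrict Hkn th)) rho i b) *+ k = mu.
  rewrite /sig_weight /=.
  apply: (@sym_sum R T n k Hkn i0 q psi (fun th => rho (th b)) Hs Hsch) => t th.
  by rewrite /pst ffunE liftp_out.
pose gin th := \sum_(j < k) rho (th (widen_ord Hkn j)).
have Hin : (\sum_th q th * psym psi (restrict Hkn th) i * gin th) *+ k = mu *+ k.
  rewrite (@sym_sum R T n k Hkn i0 q psi gin Hs Hsch); last first.
    move=> t th; rewrite /gin; under eq_bigr do rewrite /pst ffunE liftp_widen.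
    by rewrite [RHS](reindex_perm t).
  rewrite /gin; under eq_bigr do rewrite big_distrr /=.
  rewrite exchange_big /= -[X in _ *+ X]card_ord -sumr_const; apply: eq_bigr => j _.
  exact: mu_eq.
have Vin : \sum_th q th * psym psi (restrict Hkn th) i * gin th = mu.
  by apply/le_anti/andP; split; rewrite -(ler_pMn2r k0) Hin.
rewrite -(ler_pMn2r k0) Hout -Vin.
have -> : \sum_th q th * psym psi (restrict Hkn th) i * gin th =
  \sum_(j < k) sig_weight q (fun th => psym psi (restrict Hkn th)) rho i (widen_ord Hkn j).
  rewrite /sig_weight exchange_big /=; apply: eq_bigr => th _.
  by rewrite /gin big_distrr.
rewrite -[X in _ *+ X]card_ord -sumr_const; apply: ler_sum => j _.
by rewrite !weight_restrict; exact: Hp.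
Qed.

Module TopoPart.
Import numFieldNormedType.Exports.
Local Open Scope classical_set_scope.

Lemma cont_sum (R : realType) (N : nat) (I : Type) (r : seq I) (P : pred I)
  (F : I -> 'rV[R]_N -> R) :
  (forall i, continuous (F i)) -> continuous (fun v => \sum_(i <- r | P i) F i v).
Proof.
move=> hF; elim: r => [|i r IH].
  under eq_fun do rewrite big_nil; exact: cst_continuous.
under eq_fun do rewrite big_cons.
case: (P i).
  by move=> x; apply: continuousD; [exact: hF|exact: IH].
exact: IH.
Qed.

Lemma cont_mull (R : realType) (N : nat) (c : R) (F : 'rV[R]_N -> R) :
  continuous F -> continuous (fun v => c * F v).
Proof. by move=> hF x; apply: continuousM; [exact: cst_continuous|exact: hF]. Qed.

Lemma cont_mulr (R : realType) (N : nat) (c : R) (F : 'rV[R]_N -> R) :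
  continuous F -> continuous (fun v => F v * c).
Proof. by move=> hF x; apply: continuousM; [exact: hF|exact: cst_continuous]. Qed.

Lemma closed_le_fun (R : realType) (N : nat) (g h : 'rV[R]_N -> R) :
  continuous g -> continuous h -> closed [set v | g v <= h v].
Proof.
move=> hg hh.
have -> : [set v | g v <= h v] = (fun v => g v - h v) @^-1` [set x | x <= 0].
  by apply/seteqP; split => v /=; rewrite subr_le0.
have hc : continuous (fun v => g v - h v).
  by move=> x; apply: continuousB; [exact: hg|exact: hh].
exact: (proj1 (continuous_closedP _) hc _ (@closed_le R 0)).
Qed.

Lemma closed_eq_fun (R : realType) (N : nat) (g : 'rV[R]_N -> R) (c : R) :
  continuous g -> closed [set v | g v = c].
Proof.
move=> hg; have -> : [set v | g v = c] = g @^-1` [set x | x = c] by [].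
exact: (proj1 (continuous_closedP _) hg _ (@closed_eq R c)).
Qed.

Lemma closed_forall (R : realType) (N : nat) (I : Type) (S : I -> set 'rV[R]_N) :
  (forall i, closed (S i)) -> closed [set v | forall i, S i v].
Proof.
move=> hS; have -> : [set v | forall i, S i v] = \bigcap_(i in setT) S i.
  by apply/seteqP; split => v /= H i; [move=> _|]; apply: H.
by apply: closed_bigI => i _; exact: hS.
Qed.

Lemma exists_opt (R : realType) (T : finType) (k : nat) (q' : {ffun 'I_k -> T} -> R)
  (rho xi : T -> R) :
  (exists psi, is_scheme psi /\ persP q' rho psi) ->
  exists psi0, (is_scheme psi0 /\ persP q' rho psi0) /\
    forall psi, is_scheme psi -> persP q' rho psi -> Lval q' xi psi <= Lval q' xi psi0.
Proof.
move=> [psi1 [s1 p1]].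
pose N := #|{: {ffun 'I_k -> T} * 'I_k}|.
pose ofv (v : 'rV[R]_N) : {ffun 'I_k -> T} -> 'I_k -> R :=
  fun th s => v ord0 (enum_rank (th, s)).
pose tov (psi : {ffun 'I_k -> T} -> 'I_k -> R) : 'rV[R]_N :=
  \row_j psi (enum_val j).1 (enum_val j).2.
have ofvK : forall psi, ofv (tov psi) = psi.
  move=> psi; apply: functional_extensionality => th; apply: functional_extensionality => s.
  by rewrite /ofv /tov mxE enum_rankK.
pose A := [set v | is_scheme (ofv v) /\ persP q' rho (ofv v)].
pose f v := Lval q' xi (ofv v).
have cc : forall j, continuous (fun v : 'rV[R]_N => v ord0 j).
  by move=> j; exact: coord_continuous.
have cW : forall g s b, continuous (fun v => sig_weight q' (ofv v) g s b).
  move=> g s b; rewrite /sig_weight /ofv.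
  apply: cont_sum => th; apply: cont_mulr; apply: cont_mull; exact: cc.
have cf : continuous f.
  by rewrite /f /Lval; apply: cont_sum => s; exact: cW.
have clA : closed A.
  have -> : A = ([set v | forall th s, 0 <= ofv v th s] `&`
                 [set v | forall th, \sum_(s < k) ofv v th s = 1]) `&`
                 [set v | forall s b, sig_weight q' (ofv v) rho s b <= sig_weight q' (ofv v) rho s s].
    by apply/seteqP; split => v /= [[H1 H2] H3]; split => //; split.
  apply: closedI; first apply: closedI.
  - apply: closed_forall => th; apply: closed_forall => s.
    by apply: closed_le_fun; [exact: cst_continuous|exact: cc].
  - apply: closed_forall => th; apply: closed_eq_fun.
    by apply: cont_sum => s; exact: cc.
  - apply: closed_forall => s; apply: closed_forall => b.
    by apply: closed_le_fun; exact: cW.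
have cpA : compact A.
  have cB := @rV_compact R N (fun=> `[(0:R), 1]%classic) (fun _ => @segment_compact R 0 1).
  apply: (subclosed_compact clA cB).
  move=> v [[H0 H1] _] j /=.
  have -> : v ord0 j = ofv v (enum_val j).1 (enum_val j).2.
    by rewrite /ofv -surjective_pairing enum_valK.
  rewrite in_itv /= H0 /=.
  move: (H1 (enum_val j).1); set s := (enum_val j).2 => <-.
  by rewrite (bigD1 s) //= lerDl sumr_ge0.
have A0 : A !=set0 by exists (tov psi1); rewrite /A /= ofvK.
have [c cA cmax] := compact_EVT_max A0 cpA (@continuous_subspaceT _ _ A f cf).
move: (set_mem cA) => [Hc1 Hc2].
exists (ofv c); split => // psi Hs Hp.
have := cmax (tov psi); rewrite /f ofvK; apply; apply: mem_set; rewrite /A /= ofvK; done.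
Qed.

End TopoPart.
Import TopoPart.

Unset Implicit Arguments.

Theorem propositionC1 (R : realType) (T : finType) (n k : nat)
  (Hk2 : (2 <= k)%N) (Hkn : (k <= n)%N)
  (q : {ffun 'I_n -> T} -> R) (rho xi : T -> R) :
  is_distr q -> symmetric_instance q ->
  exists psi : {ffun 'I_k -> T} -> 'I_k -> R,
    let phi := fun th : {ffun 'I_n -> T} => psi (restrict Hkn th) in
    [/\ persuasive q rho (widen_ord Hkn) phi,
        optimal q rho xi phi,
        persuasive (marginal Hkn q) rho id psi,
        optimal (marginal Hkn q) rho xi psi &
        sender_utility q rho xi phi = sender_utility (marginal Hkn q) rho xi psi].
Proof.
move=> [q0 _] Hs.
have k0 : (0 < k)%N by exact: leq_trans Hk2.
pose i0 : 'I_k := Ordinal k0.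
pose q' := marginal Hkn q.
have q'0 : forall th', 0 <= q' th' by exact: marginal_ge0.
have q's : symmetric_instance q' by exact: (marginal_sym Hkn i0 Hs).
pose phic := fun (th : {ffun 'I_n -> T}) (s : 'I_k) => ((s == i0)%:R : R).
have schc : is_scheme phic.
  split; first by move=> th s; rewrite /phic ler0n.
  by move=> th; rewrite /phic (bigD1 i0) //= big1 ?addr0 // => i /negbTE ->.
have [psia [gooda _]] := convert Hkn k0 rho xi q0 Hs schc.
have [psi0 [[sch0 pers0] opt0]] := exists_opt xi (ex_intro _ psia gooda).
have [sch1 pers1 L1] := psym_good xi q's sch0 pers0.
pose psi1 := psym psi0.
have Hfp := @full_pers R T n k Hkn i0 q rho psi0 Hs sch1 pers1.
have UBn : forall phi : {ffun 'I_n -> T} -> 'I_k -> R, is_scheme phi -> sender_utility q rho xi phi <= Lval q' xi psi0.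
  move=> phi Hphi; have [psi [[sp pp] Hle]] := convert Hkn k0 rho xi q0 Hs Hphi.
  exact: le_trans Hle (opt0 _ sp pp).
have UBk : forall phi : {ffun 'I_k -> T} -> 'I_k -> R, is_scheme phi -> sender_utility q' rho xi phi <= Lval q' xi psi0.
  move=> phi Hphi; have [psi [[sp pp] Hle]] := convert (leqnn k) k0 rho xi q'0 q's Hphi.
  move: sp pp Hle; rewrite marginal_id => sp pp Hle.
  exact: le_trans Hle (opt0 _ sp pp).
have LBn : Lval q' xi psi1 <= sender_utility q rho xi (fun th => psi1 (restrict Hkn th)).
  rewrite /Lval /sender_utility; apply: ler_sum => i _.
  rewrite -weight_restrict; apply: value_ge; apply/forallP => b; exact: Hfp.
have LBk : Lval q' xi psi1 <= sender_utility q' rho xi psi1.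
  rewrite /Lval /sender_utility; apply: ler_sum => i _.
  apply: value_ge; apply/forallP => b; exact: pers1.
rewrite -/psi1 in L1.
exists psi1 => phi.
have schphi : is_scheme phi.
  by case: sch1 => a b; split => [th s|th]; [exact: a|exact: b].
split.
- by move=> s _ b; exact: Hfp.
- split => // phi' Hphi'; apply: le_trans (UBn _ Hphi') _; rewrite -L1; exact: LBn.
- by move=> s _ b; exact: pers1.
- split => // phi' Hphi'; apply: le_trans (UBk _ Hphi') _; rewrite -L1; exact: LBk.
- apply/le_anti/andP; split.
    by apply: le_trans (UBn _ schphi) _; rewrite -L1; exact: LBk.
  by apply: le_trans (UBk _ sch1) _; rewrite -L1; exact: LBn.
Qed.
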